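(* Let $d=\infty$, $C>0$, and let ${\boldsymbol\gamma}$ be finite-order weights (of some order $\omega\in\mathbb N$) with ${\boldsymbol\gamma}\in\mathcal S_{\infty,C}$. Then $$\mathrm{decay}(T^\uparrow_{\infty,C}{\boldsymbol\gamma})=\mathrm{decay}({\boldsymbol\gamma})\ge1.$$
   Context: $\mathcal U_\infty$ is the set of finite subsets of $\mathbb N$; weights are families $(\gamma_u)_{u\in\mathcal U_\infty}$ of non-negative reals. Finite-order weights of order $\omega\in\mathbb N$: $\gamma_u=0$ whenever $|u|>\omega$. For a family $(a_v)_{v\in V}$ of non-negative reals over a countably infinite index set, $\mathrm{decay}((a_v))=\sup\{\tau>0:\sum_va_v^{1/\tau}<\infty\}$, $\sup\emptyset=0$. For $C>0$: $\mathcal S_{\infty,C}=\{{\boldsymbol\gamma}:\sum_vC^{2|v|}\gamma_v<\infty\}$ and $(T^\uparrow_{\infty,C}{\boldsymbol\gamma})_u=\sum_{v\supseteq u}C^{2|v|}\gamma_v$. *)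

(* Defs.v *)
From HB Require Import structures.
From mathcomp Require Import all_boot all_order all_algebra.
From mathcomp Require Import finmap.
From mathcomp Require Import all_classical all_reals all_analysis.
Set Implicit Arguments. Unset Strict Implicit. Unset Printing Implicit Defensive.
Import Order.TTheory GRing.Theory Num.Theory.
Local Open Scope classical_set_scope.
Local Open Scope ring_scope.

Definition Uinf := {fset nat}.

Definition summable (R : realType) (T : choiceType) (a : T -> R) : Prop :=
  (\esum_(v in [set: T]) (a v)%:E < +oo)%E.

(* Including 0 in the set implements
   the convention sup(empty) = 0 and does not change the sup otherwise (all tau > 0). *)
Definition decay (R : realType) (T : choiceType) (a : T -> R) : \bar R :=
  ereal_sup ([set 0%E] `|`
    [set (tau%:E)%E | tau in [set tau : R | 0 < tau /\ summable (fun v => powR (a v) tau^-1)]]).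

Definition weights (R : realType) (g : Uinf -> R) : Prop := forall u, 0 <= g u.

Definition finite_order (R : realType) (omega : nat) (g : Uinf -> R) : Prop :=
  forall u : Uinf, (omega < #|` u|)%N -> g u = 0.

Definition S_inf (R : realType) (C : R) (g : Uinf -> R) : Prop :=
  summable (fun v : Uinf => C ^+ (2 * #|` v|) * g v).

(* (T^up_{infinity,C} gamma)_u = sum_{v superset of u} C^(2|v|) gamma_v
   (finite whenever gamma is in S_{infinity,C}; taken as a real via fine). *)
Definition Tup (R : realType) (C : R) (g : Uinf -> R) (u : Uinf) : R :=
  fine (\esum_(v in [set v : Uinf | (u `<=` v)%fset]) (C ^+ (2 * #|` v|) * g v)%:E).

(* Main.v *)
Set Warnings "-all".
Require Import Defs.
From HB Require Import structures.
From mathcomp Require Import all_boot all_order all_algebra.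
From mathcomp Require Import finmap.
From mathcomp Require Import all_classical all_reals all_analysis.
From mathcomp Require Import ring lra.
Import Order.TTheory GRing.Theory Num.Theory.
Local Open Scope ring_scope.
Section H.
Variable R : realType.
Local Open Scope classical_set_scope.

Lemma esumZ_le (T : choiceType) (J : set T) (c : R) (f : T -> R) :
  0 <= c -> (forall v, 0 <= f v) ->
  (\esum_(v in J) (c * f v)%:E <= c%:E * \esum_(v in J) (f v)%:E)%E.
Proof.
move=> c0 f0; apply: ge_ereal_sup => _ [X [finX XJ] <-].
under eq_fsbigr do rewrite EFinM.
rewrite -ge0_mule_fsumr; last by move=> i; rewrite lee_fin.
rewrite lee_wpmul2l ?lee_fin //.
by apply: ereal_sup_ubound; exists X.
Qed.

Lemma powR_split (x p : R) : 0 < x -> 0 < p ->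
  x = x `^ p * (x `^ p) `^ ((1 - p) / p).
Proof.
move=> x0 p0.
rewrite -powRrM -powRD; last by rewrite (gt_eqF x0) implybT.
have -> : p + p * ((1 - p) / p) = 1.
  by field; rewrite (gt_eqF p0).
by rewrite powRr1 // ltW.
Qed.

Lemma esum_powR_sub (T : choiceType) (J : set T) (a : T -> R) (p : R) :
  (forall v, 0 <= a v) -> 0 < p -> p <= 1 ->
  ((fine (\esum_(v in J) (a v)%:E) `^ p)%:E
     <= \esum_(v in J) ((a v) `^ p)%:E)%E.
Proof.
move=> a0 p0 p1.
have S0 : (0 <= \esum_(v in J) ((a v) `^ p)%:E)%E.
  by apply: esum_ge0 => v _; rewrite lee_fin powR_ge0.
have Sge : forall v, J v -> ((a v `^ p)%:E <= \esum_(v in J) ((a v) `^ p)%:E)%E.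
  move=> v Jv; apply: esum_ge; exists [set v].
    by split; [exact: finite_set1 | move=> w ->].
  by rewrite fsbig_set1.
case ES : (\esum_(v in J) ((a v) `^ p)%:E) S0 Sge => [s| |] //; last first.
  by move=> _ _; rewrite leey.
rewrite lee_fin => s0 Sge.
set K := s `^ ((1 - p) / p).
have K0 : 0 <= K by apply: powR_ge0.
have pt : forall v, J v -> a v <= K * a v `^ p.
  move=> v Jv; have [->|av] := eqVneq (a v) 0.
    by rewrite mulr_ge0 // powR_ge0.
  have avp : 0 < a v by rewrite lt0r av a0.
  rewrite [X in X <= _](@powR_split (a v) p avp p0) mulrC ler_wpM2r ?powR_ge0 //.
  apply: ge0_ler_powR.
  - by rewrite divr_ge0 ?subr_ge0 // ltW.
  - by rewrite nnegrE powR_ge0.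
  - by rewrite nnegrE.
  - by rewrite -lee_fin Sge.
have E1 : (\esum_(v in J) (a v)%:E <= (K * s)%:E)%E.
  apply: (@le_trans _ _ (\esum_(v in J) (K * a v `^ p)%:E)).
    by apply: le_esum => v Jv; rewrite lee_fin pt.
  apply: le_trans (@esumZ_le _ J K (fun v => a v `^ p) K0 _) _.
    by move=> v; apply: powR_ge0.
  by rewrite ES.
have E0 : (0 <= \esum_(v in J) (a v)%:E)%E.
  by apply: esum_ge0 => v _; rewrite lee_fin.
case EE : (\esum_(v in J) (a v)%:E) E0 E1 => [e| |] //= e0 E1.
rewrite lee_fin; rewrite lee_fin in e0 E1.
apply: le_trans (ge0_ler_powR (ltW p0) _ _ E1) _.
- by rewrite nnegrE.
- by rewrite nnegrE mulr_ge0.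
rewrite powRM // /K -powRrM.
have [->|s0'] := eqVneq s 0.
  by rewrite mulrC powR0 ?mul0r // (gt_eqF p0).
rewrite -powRD; last by rewrite s0' implybT.
have -> : (1 - p) / p * p + p = 1 by field; rewrite (gt_eqF p0).
by rewrite powRr1.
Qed.
Lemma count_esum (v : Uinf) (x : R) : 0 <= x ->
  \esum_(u in [set u : Uinf | (u `<=` v)%fset]) x%:E = ((2 ^ #|` v|)%:R * x)%:E.
Proof.
move=> x0.
have -> : [set u : Uinf | (u `<=` v)%fset] = [set` fpowerset v].
  by apply/seteqP; split => u /=; rewrite fpowersetE.
rewrite esum_fset; [|exact: finite_fset|by move=> i _; rewrite lee_fin].
rewrite fsbig_finite; last exact: finite_fset.
rewrite set_fsetK sumEFin big_const_seq count_predT.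
rewrite card_fpowerset.
by rewrite iter_addr_0 mulr_natl.
Qed.
Lemma sup_eq (PT PG : set R) :
  PT `<=` PG -> (forall t, PG t -> 1 <= t -> PT t) -> PT 1 ->
  ereal_sup ([set 0%E] `|` [set (t%:E)%E | t in PT]) =
  ereal_sup ([set 0%E] `|` [set (t%:E)%E | t in PG]).
Proof.
move=> TG GT T1; apply/eqP; rewrite eq_le; apply/andP; split.
  apply: le_ereal_sup => x [->|[t Pt <-]]; [by left | by right; exists t => //; apply: TG].
apply: ge_ereal_sup => x [->|[t Pt <-]].
  by apply: ereal_sup_ubound; left.
have [t1|t1] := lerP 1 t.
  by apply: ereal_sup_ubound; right; exists t => //; apply: GT.
apply: (@le_trans _ _ 1%:E); first by rewrite lee_fin ltW.
by apply: ereal_sup_ubound; right; exists 1.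
Qed.

Lemma fin_mul_lt (c : R) (y : \bar R) : (0 <= y)%E -> (y < +oo)%E ->
  (c%:E * y < +oo)%E.
Proof. by case: y => [r| |] //= _ _; rewrite -EFinM ltry. Qed.
Lemma esum_swap (f : Uinf -> Uinf -> \bar R) :
  (forall u v, (0 <= f u v)%E) ->
  (\esum_(u in [set: Uinf]) \esum_(v in [set: Uinf]) f u v =
   \esum_(v in [set: Uinf]) \esum_(u in [set: Uinf]) f u v)%E.
Proof.
move=> f0.
rewrite esum_esum // esum_esum //.
have -> : [set: Uinf] `*`` (fun=> [set: Uinf]) = [set: Uinf * Uinf].
  by apply/seteqP; split.
rewrite (@reindex_esum R _ _ [set: Uinf * Uinf] [set: Uinf * Uinf]
   (fun k : Uinf * Uinf => (k.2, k.1))) //.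
rewrite setTT_bijective.
by exists (fun k : Uinf * Uinf => (k.2, k.1)) => -[].
Qed.
End H.

Theorem mainTheorem12 (R : realType) (C : R) (omega : nat) (g : Uinf -> R) :
  0 < C -> weights g -> finite_order omega g -> S_inf C g ->
  decay (Tup C g) = decay g /\ (1%:E <= decay g)%E.
Proof.
move=> C0 g0 gfin hS.
set b := fun v : Uinf => C ^+ (2 * #|` v|) * g v.
have b0 : forall v, 0 <= b v by move=> v; rewrite mulr_ge0 // exprn_ge0 // ltW.
have bfin : (\esum_(v in [set: Uinf]) (b v)%:E < +oo)%E := hS.
set c0 := Num.min 1 (C ^+ (2 * omega)).
set M := Num.max 1 (C ^+ (2 * omega)).
have c0p : 0 < c0 by rewrite lt_min ltr01 exprn_gt0.
have M0 : 0 <= M by rewrite le_max ler01.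
have Cexp : forall v : Uinf, (#|`v| <= omega)%N ->
    c0 <= C ^+ (2 * #|`v|) /\ C ^+ (2 * #|`v|) <= M.
  move=> v hv; have hv2 : (2 * #|`v| <= 2 * omega)%N by rewrite leq_mul2l hv orbT.
  have [C1|C1] := lerP 1 C.
    split.
      by rewrite ge_min (exprn_ege1 _ C1).
    by rewrite le_max (ler_weXn2l C1 hv2) orbT.
  split.
    by rewrite ge_min (ler_wiXn2l (ltW C0) (ltW C1) hv2) orbT.
  by rewrite le_max (exprn_ile1 _ (ltW C0) (ltW C1)).
have lowb : forall v, c0 * g v <= b v.
  move=> v; have [hv|hv] := leqP #|`v| omega.
    by rewrite /b ler_wpM2r // (Cexp v hv).1.
  by rewrite /b gfin // !mulr0.
have upb : forall v, b v <= M * g v.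
  move=> v; have [hv|hv] := leqP #|`v| omega.
    by rewrite /b ler_wpM2r // (Cexp v hv).2.
  by rewrite /b gfin // !mulr0.
have Ele : forall u, (\esum_(v in [set v : Uinf | (u `<=` v)%fset]) (b v)%:E
    <= \esum_(v in [set: Uinf]) (b v)%:E)%E.
  move=> u; rewrite esum_mkcond; apply: le_esum => v _.
  by case: ifP => _; rewrite // lee_fin.
have TupE : forall u, (Tup C g u)%:E =
    \esum_(v in [set v : Uinf | (u `<=` v)%fset]) (b v)%:E.
  move=> u; rewrite /Tup -/b fineK // ge0_fin_numE.
    exact: le_lt_trans (Ele u) bfin.
  by apply: esum_ge0 => v _; rewrite lee_fin; apply: b0.
have Tup0 : forall u, 0 <= Tup C g u.
  by move=> u; rewrite -lee_fin TupE; apply: esum_ge0 => v _; rewrite lee_fin.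
have bT : forall u, b u <= Tup C g u.
  move=> u; rewrite -lee_fin TupE; apply: esum_ge; exists [set u]%classic.
    by split; [exact: finite_set1 | move=> w -> /=; exact: fsubset_refl].
  by rewrite fsbig_set1.
have c0inv : 0 <= c0^-1 by rewrite invr_ge0 ltW.
have gle : forall v, g v <= c0^-1 * b v.
  move=> v; have -> : g v = c0^-1 * (c0 * g v) by rewrite mulKf // gt_eqF.
  by rewrite ler_wpM2l.
have gsum1 : Defs.summable (fun v : Uinf => g v `^ (1:R)^-1).
  rewrite /Defs.summable invr1.
  apply: (@le_lt_trans _ _ (\esum_(v in [set: Uinf]) (c0^-1 * b v)%:E)).
    by apply: le_esum => v _; rewrite lee_fin powRr1.
  apply: le_lt_trans (@esumZ_le R _ _ c0^-1 b c0inv b0) _.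
  apply: fin_mul_lt => //.
  by apply: esum_ge0 => v _; rewrite lee_fin.
split; last first.
  by apply: ereal_sup_ubound; right; exists 1 => //; split => //; exact: ltr01.
have GT : forall t, 0 < t -> Defs.summable (fun v : Uinf => g v `^ t^-1) ->
    1 <= t -> Defs.summable (fun v : Uinf => Tup C g v `^ t^-1).
  move=> t t0 hs t1.
  have p0 : 0 < t^-1 by rewrite invr_gt0.
  have p1 : t^-1 <= 1 by rewrite invf_le1.
  move: hs; rewrite /Defs.summable; set p := t^-1 => hs.
  set K := (2 ^ omega)%:R * M `^ p.
  have K0 : 0 <= K by rewrite mulr_ge0 // powR_ge0.
  apply: (@le_lt_trans _ _ (\esum_(u in [set: Uinf])
      \esum_(v in [set v : Uinf | (u `<=` v)%fset]) (b v `^ p)%:E)).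
    apply: le_esum => u _; rewrite /Tup -/b.
    exact: (@esum_powR_sub R _ _ b p b0 p0 p1).
  under eq_esum => u _ do rewrite esum_mkcond.
  rewrite esum_swap; last first.
    by move=> u v; case: ifP => _; rewrite // lee_fin powR_ge0.
  apply: (@le_lt_trans _ _ (\esum_(v in [set: Uinf]) (K * g v `^ p)%:E)).
    apply: le_esum => v _.
    have -> : \esum_(u in [set: Uinf]) (if v \in [set v0 : Uinf | (u `<=` v0)%fset]%classic
        then (b v `^ p)%:E else 0%E) =
        \esum_(u in [set u : Uinf | (u `<=` v)%fset]) (b v `^ p)%:E.
      rewrite [RHS]esum_mkcond; apply: eq_esum => u _.
      by [].
    rewrite count_esum ?powR_ge0 // lee_fin.
    have [hv|hv] := leqP #|`v| omega.
      rewrite /K -mulrA; apply: ler_pM.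
      - by rewrite ler0n.
      - by rewrite powR_ge0.
      - by rewrite ler_nat leq_pexp2l.
      rewrite -powRM //; apply: ge0_ler_powR.
      + exact: ltW p0.
      + by rewrite nnegrE.
      + by rewrite nnegrE mulr_ge0.
      + exact: upb.
    rewrite /b gfin // mulr0 powR0 ?mulr0; last by rewrite gt_eqF.
    by [].
  apply: le_lt_trans (@esumZ_le R _ _ K (fun v => g v `^ p) K0
     (fun v => powR_ge0 _ _)) _.
  apply: fin_mul_lt => //.
  by apply: esum_ge0 => v _; rewrite lee_fin powR_ge0.
rewrite /decay; apply: sup_eq.
- move=> t /= [t0 hs]; split => //.
  have p0 : 0 < t^-1 by rewrite invr_gt0.
  move: hs; rewrite /Defs.summable; set p := t^-1 => hs.
  have cp0 : 0 <= c0^-1 `^ p by rewrite powR_ge0.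
  apply: (@le_lt_trans _ _ (\esum_(v in [set: Uinf]) (c0^-1 `^ p * Tup C g v `^ p)%:E)).
    apply: le_esum => v _; rewrite lee_fin -powRM //; apply: ge0_ler_powR.
    + exact: ltW p0.
    + by rewrite nnegrE.
    + by rewrite nnegrE mulr_ge0.
    + exact: le_trans (gle v) (ler_wpM2l c0inv (bT v)).
  apply: le_lt_trans (@esumZ_le R _ _ _ (fun v => Tup C g v `^ p) cp0
     (fun v => powR_ge0 _ _)) _.
  apply: fin_mul_lt => //.
  by apply: esum_ge0 => v _; rewrite lee_fin powR_ge0.
- move=> t /= [t0 hs] t1; split => //; exact: GT.
- split; first exact: ltr01.
  by apply: GT => //; exact: ltr01.
Qed.
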